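(* Let $f\neq 0$ and $\mu\in\mathbb{R}$. The curve $\left(x^2+y^2-\mu f x\right)^2=f^2(x^2+2y^2)$ (with the origin removed) is the image, under inversion with respect to the circle $x^2+y^2=f^2$, of the conic $$2y^2+(1-\mu^2)x^2+2\mu f x-f^2=0,$$ which has eccentricity $e=\sqrt{(\mu^2+1)/2}$, focal parameter $p=f/2$, and foci at the points $\left(\dfrac{f}{2(\mu\pm e)},0\right)$.
   Context: Inversion with respect to the circle $x^2+y^2=f^2$ maps a point $P\neq 0$ to $f^2P/|P|^2$. *)

(* Defs.v *)
From Stdlib Require Import Reals.
Open Scope R_scope.

Definition pt : Type := (R * R)%type.

Definition dist_pt (P Q : pt) : R :=
  sqrt ((fst P - fst Q) ^ 2 + (snd P - snd Q) ^ 2).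

(* A line a x + b y + c = 0 (non-degeneracy (a,b) <> (0,0) is required
   where lines are used). *)
Record line : Type := mkLine { la : R; lb : R; lc : R }.

Definition dist_line (P : pt) (L : line) : R :=
  Rabs (la L * fst P + lb L * snd P + lc L) / sqrt (la L ^ 2 + lb L ^ 2).

(* Inversion w.r.t. the circle x^2+y^2 = f^2 : P |-> f^2 P / |P|^2
   (only meaningful for P <> 0). *)
Definition inversion (f : R) (P : pt) : pt :=
  (f ^ 2 * fst P / (fst P ^ 2 + snd P ^ 2),
   f ^ 2 * snd P / (fst P ^ 2 + snd P ^ 2)).

(* K is the conic with focus F, directrix L and eccentricity e > 0:
   K = { P | dist(P,F) = e * dist(P,L) }.  Its focal parameter
   (semi-latus rectum) is then e * dist(F,L). *)
Definition is_focus_directrix (K : pt -> Prop) (F : pt) (L : line) (e : R) : Prop :=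
  0 < e /\ (la L, lb L) <> (0, 0) /\
  forall P : pt, K P <-> dist_pt P F = e * dist_line P L.

Definition conic_K (f mu : R) (P : pt) : Prop :=
  2 * snd P ^ 2 + (1 - mu ^ 2) * fst P ^ 2 + 2 * mu * f * fst P - f ^ 2 = 0.

Definition curve_C (f mu : R) (P : pt) : Prop :=
  P <> (0, 0) /\
  (fst P ^ 2 + snd P ^ 2 - mu * f * fst P) ^ 2 = f ^ 2 * (fst P ^ 2 + 2 * snd P ^ 2).

(* Main.v *)
Require Import Defs.
From Stdlib Require Import Reals Lra Psatz.
Open Scope R_scope.

Lemma sqrt_abs_iff (A t : R) : 0 <= A -> (sqrt A = Rabs t <-> A = t ^ 2).
Proof.
  intros HA; split; intro H.
  - rewrite <- (pow2_sqrt A HA), H, pow2_abs; reflexivity.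
  - rewrite H, <- Rsqr_pow2, sqrt_Rsqr_abs; reflexivity.
Qed.

Lemma scale_abs (e u n : R) : 0 < e -> 0 < n -> e * (Rabs u / n) = Rabs (e * u / n).
Proof.
  intros He Hn. unfold Rdiv. rewrite !Rabs_mult, Rabs_inv.
  rewrite (Rabs_right e) by lra. rewrite (Rabs_right n) by lra. ring.
Qed.

Lemma r_pos (x y : R) : (x, y) <> (0, 0) -> 0 < x ^ 2 + y ^ 2.
Proof.
  intros H. destruct (Req_dec x 0) as [->|Hx].
  - destruct (Req_dec y 0) as [->|Hy]; [congruence|]. nra.
  - nra.
Qed.

Lemma inv_inv (f : R) (P : pt) : f <> 0 -> P <> (0,0) -> inversion f (inversion f P) = P.
Proof.
  destruct P as [x y]; intros hf HP. pose proof (r_pos x y HP) as Hr.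
  unfold inversion; cbn [fst snd].
  assert (E : (f ^ 2 * x / (x^2+y^2)) ^ 2 + (f ^ 2 * y / (x^2+y^2)) ^ 2 = f^4 / (x^2+y^2)).
  { field. lra. }
  rewrite E. f_equal; field; split; try lra; apply pow_nonzero; auto.
Qed.

Lemma inv_nz (f : R) (P : pt) : f <> 0 -> P <> (0,0) -> inversion f P <> (0,0).
Proof.
  destruct P as [x y]; intros hf HP. pose proof (r_pos x y HP) as Hr.
  unfold inversion; cbn [fst snd]. intro E. pose proof (f_equal fst E) as E1. pose proof (f_equal snd E) as E2. cbn [fst snd] in E1, E2.
  apply HP. assert (f^2 <> 0) by (apply pow_nonzero; auto).
  assert (x = 0). { assert (Hq : x = (f^2*x/(x^2+y^2)) * ((x^2+y^2)/f^2)) by (field; split; lra).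
    rewrite Hq, E1; ring. }
  assert (y = 0). { assert (Hq : y = (f^2*y/(x^2+y^2)) * ((x^2+y^2)/f^2)) by (field; split; lra).
    rewrite Hq, E2; ring. }
  subst; reflexivity.
Qed.

Lemma conic_inv (f mu : R) (P : pt) : f <> 0 -> P <> (0,0) ->
  (conic_K f mu (inversion f P) <->
   (fst P ^ 2 + snd P ^ 2 - mu * f * fst P) ^ 2 = f ^ 2 * (fst P ^ 2 + 2 * snd P ^ 2)).
Proof.
  destruct P as [x y]; intros hf HP. pose proof (r_pos x y HP) as Hr.
  unfold conic_K, inversion; cbn [fst snd].
  assert (K : (2 * (f ^ 2 * y / (x ^ 2 + y ^ 2)) ^ 2 +
    (1 - mu ^ 2) * (f ^ 2 * x / (x ^ 2 + y ^ 2)) ^ 2 +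
    2 * mu * f * (f ^ 2 * x / (x ^ 2 + y ^ 2)) - f ^ 2) * (x^2+y^2)^2
    = - f^2 * ((x ^ 2 + y ^ 2 - mu * f * x) ^ 2 - f ^ 2 * (x ^ 2 + 2 * y ^ 2))).
  { field; lra. }
  assert (f^2 <> 0) by (apply pow_nonzero; auto).
  assert ((x^2+y^2)^2 <> 0) by (apply pow_nonzero; lra).
  split; intro Hc.
  - rewrite Hc, Rmult_0_l in K. symmetry in K.
    apply Rmult_integral in K as [K|K]; [exfalso; apply H; lra| lra].
  - rewrite Hc, Rminus_diag, Rmult_0_r in K.
    apply Rmult_integral in K as [K|K]; [exact K| contradiction].
Qed.

Lemma part2 (f mu e s : R) : f <> 0 -> 0 < e -> e^2 = (mu^2+1)/2 -> (s = 1 \/ s = -1) ->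
  mu + s * e <> 0 ->
  exists L : line,
    is_focus_directrix (conic_K f mu) (f / (2 * (mu + s * e)), 0) L e /\
    e * dist_line (f / (2 * (mu + s * e)), 0) L = Rabs f / 2.
Proof.
  intros hf He He2 Hs Hm.
  assert (Hs2 : s * s = 1) by (destruct Hs; subst; lra).
  assert (HeW : e * (2 * e + s * mu) = 1 + mu * (mu + s * e)).
  { destruct Hs as [-> | ->]; nra. }
  assert (HW2 : (2 * e + s * mu) ^ 2 = 1 + 2 * (mu + s * e) ^ 2).
  { destruct Hs as [-> | ->]; nra. }
  set (m := mu + s * e) in *.
  set (W := 2 * e + s * mu) in *.
  set (a := f / (2 * m)).
  assert (Hf : f = 2 * a * m) by (unfold a; field; auto).
  set (d := a * W / e).
  assert (Hed : forall x, e * (x - d) = e * x - a * W) by (intro x; unfold d; field; lra).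
  assert (Hsq : sqrt (1 ^ 2 + 0 ^ 2) = 1) by (replace (1^2+0^2) with 1 by ring; apply sqrt_1).
  assert (Hdl : forall P : pt, e * dist_line P (mkLine 1 0 (-d)) = Rabs (e * fst P - a * W)).
  { intros [x y]. unfold dist_line; cbn [la lb lc fst snd]. rewrite Hsq.
    rewrite scale_abs by lra. rewrite <- Hed. f_equal. field. }
  exists (mkLine 1 0 (-d)). split.
  - split; [exact He|]. split; [cbn; intro E; injection E; lra|].
    intros [x y]. rewrite Hdl. unfold dist_pt, conic_K; cbn [fst snd].
    rewrite sqrt_abs_iff by (apply Rplus_le_le_0_compat; apply pow2_ge_0).
    assert (Id : 2 * ((x - a) ^ 2 + (y - 0) ^ 2 - (e * x - a * W) ^ 2) =
       2 * y ^ 2 + (1 - mu ^ 2) * x ^ 2 + 2 * mu * f * x - f ^ 2).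
    { fold a. rewrite Hf.
      replace (2 * ((x - a) ^ 2 + (y - 0) ^ 2 - (e * x - a * W) ^ 2)) with
        (2*x^2 - 4*a*x + 2*a^2 + 2*y^2 - 2*(e^2)*x^2 + 4*a*x*(e*W) - 2*a^2*(W^2)) by ring.
      rewrite HW2, HeW, He2. field. }
    rewrite <- Id. clearbody d a W m. split; intro H; lra.
  - rewrite Hdl; cbn [fst]. fold a.
    assert (E : e * a - a * W = - s * (f / 2)).
    { rewrite Hf. unfold W, m. replace (- s * (2 * a * (mu + s * e) / 2)) with (- a * (s * mu + (s*s) * e)) by field.
      rewrite Hs2. ring. }
    rewrite E, Rabs_mult. unfold Rdiv. rewrite Rabs_mult.
    rewrite (Rabs_right (/2)) by lra.
    destruct Hs as [Hs|Hs]; rewrite Hs; [rewrite Rabs_left by lra | rewrite Rabs_right by lra]; lra.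
Qed.

Lemma vert (f mu p q al be ga x0 : R) :
  (forall x y, 2 * y ^ 2 + (1 - mu ^ 2) * x ^ 2 + 2 * mu * f * x - f ^ 2 = 0 ->
     (x - p) ^ 2 + (y - q) ^ 2 = (al * x + be * y + ga) ^ 2) ->
  0 < ((mu^2-1)*x0^2 - 2*mu*f*x0 + f^2)/2 ->
  q + be * (al * x0 + ga) = 0 /\
  (1 - be^2) * (((mu^2-1)*x0^2 - 2*mu*f*x0 + f^2)/2) + ((x0-p)^2 + q^2 - (al*x0+ga)^2) = 0.
Proof.
  intros HG HY. set (Y := ((mu^2-1)*x0^2 - 2*mu*f*x0 + f^2)/2) in *.
  set (s0 := sqrt Y).
  assert (Hs0 : 0 < s0) by (apply sqrt_lt_R0; lra).
  assert (Hs2 : s0 ^ 2 = Y) by (apply pow2_sqrt; lra).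
  assert (H1 := HG x0 s0). assert (H2 := HG x0 (-s0)).
  assert (C1 : 2 * s0 ^ 2 + (1 - mu ^ 2) * x0 ^ 2 + 2 * mu * f * x0 - f ^ 2 = 0).
  { rewrite Hs2. unfold Y. field. }
  assert (C2 : 2 * (-s0) ^ 2 + (1 - mu ^ 2) * x0 ^ 2 + 2 * mu * f * x0 - f ^ 2 = 0).
  { replace ((-s0)^2) with (s0^2) by ring. exact C1. }
  specialize (H1 C1). specialize (H2 C2).
  assert (E1 : (1 - be^2) * s0^2 - 2 * (q + be * (al * x0 + ga)) * s0 + ((x0-p)^2 + q^2 - (al*x0+ga)^2) = 0).
  { lra. }
  assert (E2 : (1 - be^2) * s0^2 + 2 * (q + be * (al * x0 + ga)) * s0 + ((x0-p)^2 + q^2 - (al*x0+ga)^2) = 0).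
  { lra. }
  rewrite Hs2 in E1, E2. split.
  - assert (E3 : 4 * (q + be * (al * x0 + ga)) * s0 = 0) by lra.
    apply Rmult_integral in E3 as [E3|E3]; lra.
  - lra.
Qed.

Lemma coeffs (f mu p q al be ga : R) : f <> 0 ->
  (forall x y, 2 * y ^ 2 + (1 - mu ^ 2) * x ^ 2 + 2 * mu * f * x - f ^ 2 = 0 ->
     (x - p) ^ 2 + (y - q) ^ 2 = (al * x + be * y + ga) ^ 2) ->
  q + be * ga = 0 /\ be * al = 0 /\
  1 - al^2 + (1 - be^2) * (mu^2 - 1) / 2 = 0 /\
  -2*p - 2*al*ga - (1-be^2)*mu*f = 0 /\
  p^2 + q^2 - ga^2 + (1-be^2)*f^2/2 = 0.
Proof.
  intros hf HG.
  set (A := 1 - al^2 + (1 - be^2) * (mu^2 - 1) / 2).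
  set (B := -2*p - 2*al*ga - (1-be^2)*mu*f).
  set (C := p^2 + q^2 - ga^2 + (1-be^2)*f^2/2).
  assert (HQ : forall x, (1 - be^2) * (((mu^2-1)*x^2 - 2*mu*f*x + f^2)/2) + ((x-p)^2 + q^2 - (al*x+ga)^2)
     = A * x^2 + B * x + C) by (intro x; unfold A, B, C; field).
  set (d := / (4 * (mu^2 + 1))).
  assert (Hd : 0 < d) by (unfold d; apply Rinv_0_lt_compat; nra).
  assert (Hd1 : 4 * (mu^2+1) * d = 1) by (unfold d; field; nra).
  assert (Hf2 : 0 < f^2) by (pose proof (pow_nonzero f 2 hf); pose proof (pow2_ge_0 f); lra).
  assert (P0 : 0 < ((mu^2-1)*0^2 - 2*mu*f*0 + f^2)/2) by lra.
  assert (Hpoly : forall t, t = 1 \/ t = -1 -> 0 < (mu^2-1)*d^2 - 2*mu*t*d + 1).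
  { intros t Ht. assert (d <= 1/4) by nra.
    assert (2*mu*t*d <= 1/2).
    { destruct Ht as [->| ->]; nra. }
    nra. }
  assert (Pt : forall t, t = 1 \/ t = -1 -> 0 < ((mu^2-1)*(t*d*f)^2 - 2*mu*f*(t*d*f) + f^2)/2).
  { intros t Ht. specialize (Hpoly t Ht).
    replace (((mu^2-1)*(t*d*f)^2 - 2*mu*f*(t*d*f) + f^2)/2) with
      (f^2 * (t^2 * (mu^2-1)*d^2 - 2*mu*t*d + 1) / 2) by field.
    assert (t^2 = 1) by (destruct Ht as [->| ->]; ring).
    rewrite H. rewrite Rmult_1_l. apply Rdiv_lt_0_compat; [|lra]. apply Rmult_lt_0_compat; lra. }
  destruct (vert f mu p q al be ga 0 HG P0) as [V1 W1].
  destruct (vert f mu p q al be ga (1*d*f) HG (Pt 1 (or_introl eq_refl))) as [V2 W2].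
  destruct (vert f mu p q al be ga (-1*d*f) HG (Pt (-1) (or_intror eq_refl))) as [V3 W3].
  rewrite HQ in W1, W2, W3.
  assert (Ht : 1*d*f <> 0) by (apply Rmult_integral_contrapositive_currified; [lra|auto]).
  set (t := 1*d*f) in *.
  replace (-1*d*f) with (-t) in W3 by (unfold t; ring).
  assert (HC : C = 0) by (rewrite <- W1; ring).
  assert (HA : A * (2 * t^2) = 0) by nra.
  assert (t^2 <> 0) by (apply pow_nonzero; auto).
  assert (HA' : A = 0).
  { apply Rmult_integral in HA as [|HA]; auto. exfalso. lra. }
  assert (HB : B * t = 0) by nra.
  assert (HB' : B = 0) by (apply Rmult_integral in HB as [|]; [auto|contradiction]).
  assert (Hba : (be * al) * t = 0) by lra.
  assert (Hba' : be * al = 0) by (apply Rmult_integral in Hba as [|]; [auto|contradiction]).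
  repeat split; auto. lra.
Qed.

Lemma part3 (f mu e : R) (F : pt) (L : line) (e' : R) : f <> 0 -> 0 < e -> e^2 = (mu^2+1)/2 ->
  is_focus_directrix (conic_K f mu) F L e' ->
  e' = e /\ e' * dist_line F L = Rabs f / 2 /\
  exists s : R, (s = 1 \/ s = -1) /\ mu + s * e <> 0 /\ F = (f / (2 * (mu + s * e)), 0).
Proof.
  intros hf He He2 [He' [Hab HK]].
  destruct F as [p q]; destruct L as [a b c]; cbn [la lb lc] in *.
  pose proof (r_pos a b Hab) as Hr.
  set (n := sqrt (a^2 + b^2)).
  assert (Hn : 0 < n) by (apply sqrt_lt_R0; lra).
  set (al := e' * a / n). set (be := e' * b / n). set (ga := e' * c / n).
  assert (Hdl : forall P : pt, e' * dist_line P (mkLine a b c) = Rabs (al * fst P + be * snd P + ga)).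
  { intros [x y]. unfold dist_line; cbn [la lb lc fst snd]. fold n.
    rewrite scale_abs by lra. f_equal. unfold al, be, ga. field. lra. }
  assert (HG : forall x y, 2 * y ^ 2 + (1 - mu ^ 2) * x ^ 2 + 2 * mu * f * x - f ^ 2 = 0 <->
     (x - p) ^ 2 + (y - q) ^ 2 = (al * x + be * y + ga) ^ 2).
  { intros x y. rewrite <- (sqrt_abs_iff _ _ (Rplus_le_le_0_compat _ _ (pow2_ge_0 _) (pow2_ge_0 _))).
    change (conic_K f mu (x,y) <-> sqrt ((fst (x,y) - fst (p,q)) ^ 2 + (snd (x,y) - snd (p,q)) ^ 2) =
       Rabs (al * fst (x,y) + be * snd (x,y) + ga)).
    rewrite <- Hdl. apply HK. }
  assert (Hf2 : 0 < f^2) by (pose proof (pow_nonzero f 2 hf); pose proof (pow2_ge_0 f); lra).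
  destruct (coeffs f mu p q al be ga hf (fun x y => proj1 (HG x y))) as [E1 [E2 [EA [EB EC]]]].
  assert (Hbe1 : be^2 <> 1).
  { intro Hb. assert (G0 : (0 - p) ^ 2 + (0 - q) ^ 2 = (al * 0 + be * 0 + ga) ^ 2).
    { rewrite Hb in EC. lra. }
    apply HG in G0. lra. }
  destruct (Req_dec be 0) as [Hbe0|Hbe0].
  2: { exfalso. assert (Hal : al = 0).
       { apply Rmult_integral in E2 as [|]; [contradiction|auto]. }
       rewrite Hal in EA, EB.
       assert (Hk : (be^2-1) * (mu^2 - 1) = 2) by lra.
       assert (Hp : p = (be^2-1) * mu * f / 2) by lra.
       assert (Hq : q = - be * ga) by lra.
       assert (Hk0 : be^2-1 <> 0) by lra.
       assert (EC' : (be^2-1) * ((be^2-1)*mu^2*f^2/4 + ga^2 - f^2/2) = 0).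
       { rewrite <- EC, Hp, Hq. field. }
       apply Rmult_integral in EC' as [|EC']; [contradiction|].
       assert (EC'' : f^2/2 + (mu^2-1)*ga^2 = 0).
       { replace (f^2/2 + (mu^2-1)*ga^2) with ((mu^2-1) * ((be^2-1)*mu^2*f^2/4 + ga^2 - f^2/2) - ((be^2-1)*(mu^2-1)) * mu^2*f^2/4 + mu^2 * f^2/2) by field.
         rewrite EC', Hk. field. }
       assert (Hkm : be^2 - 1 >= -1) by nra.
       assert (Hmu : 0 < mu^2 - 1) by nra.
       nra. }
  assert (Hq0 : q = 0) by (rewrite Hbe0 in E1; lra).
  rewrite Hbe0 in EA, EB, EC. rewrite Hq0 in EC.
  assert (Hal2 : al^2 = e^2) by lra.
  assert (Hb0 : b = 0).
  { unfold be in Hbe0. apply Rmult_integral in Hbe0 as [Hx|Hx].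
    - apply Rmult_integral in Hx as [|]; [lra|auto].
    - exfalso. pose proof (Rinv_neq_0_compat n ltac:(lra)). contradiction. }
  assert (Ha0 : a <> 0) by (intro; subst; apply Hab; reflexivity).
  assert (Hn2 : n^2 = a^2) by (unfold n; rewrite pow2_sqrt by lra; rewrite Hb0; ring).
  assert (Hal2' : al^2 = e'^2) by (unfold al; field_simplify; [rewrite Hn2; field; auto | lra]).
  assert (Hee : e' = e) by nra.
  subst e'. split; [reflexivity|].
  assert (Hp0 : p <> 0).
  { intro Hp. rewrite Hp in EB, EC. assert (al*ga = - mu*f/2) by lra.
    assert (al^2 * ga^2 = mu^2*f^2/4) by (replace (al^2*ga^2) with ((al*ga)^2) by ring; rewrite H; field).
    rewrite Hal2, He2 in H0. assert (ga^2 = f^2/2) by lra. rewrite H1 in H0. nra. }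
  set (m := f / (2 * p)).
  assert (Hf : f = 2 * p * m) by (unfold m; field; auto).
  assert (Hm0 : m <> 0) by (intro Hm; rewrite Hm in Hf; lra).
  assert (Hag : al * ga = - p - mu * f / 2) by lra.
  assert (Key : p^2 * ((m - mu)^2 - e^2) = 0).
  { assert (al^2 * (p ^ 2 - ga ^ 2 + f ^ 2 / 2) = 0) by (assert (EC0 : p^2 - ga^2 + f^2/2 = 0) by lra; rewrite EC0; ring).
    replace (al^2 * (p ^ 2 - ga ^ 2 + f ^ 2 / 2)) with (al^2 * p^2 - (al*ga)^2 + al^2 * f^2/2) in H by field.
    rewrite Hag, Hal2, Hf in H. rewrite He2 in *. nra. }
  apply Rmult_integral in Key as [Key|Key]; [exfalso; apply Hp0; nra|].
  assert (Hs : m - mu = e \/ m - mu = - e).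
  { assert ((m - mu - e) * (m - mu + e) = 0) by nra.
    apply Rmult_integral in H as [|]; [left|right]; lra. }
  assert (Hfoc : exists s, (s = 1 \/ s = -1) /\ m = mu + s * e).
  { destruct Hs; [exists 1 | exists (-1)]; split; auto; lra. }
  destruct Hfoc as [s [Hs1 Hms]].
  split.
  - rewrite Hdl. cbn [fst snd]. rewrite Hq0, Hbe0.
    assert (X : al * (al * p + 0 * 0 + ga) = - s * e * f / 2).
    { replace (al * (al * p + 0 * 0 + ga)) with (al^2 * p + al * ga) by ring.
      rewrite Hag, Hal2, He2, Hf, Hms. destruct Hs1 as [-> | ->]; nra. }
    assert (X2 : (al * p + 0 * 0 + ga)^2 = (f/2)^2).
    { apply (Rmult_eq_reg_l (e^2)); [|nra].
      rewrite <- Hal2. replace (al^2 * (al * p + 0 * 0 + ga) ^ 2) with ((al * (al * p + 0 * 0 + ga))^2) by ring.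
      rewrite X, Hal2. destruct Hs1 as [-> | ->]; field. }
    rewrite <- !Rsqr_pow2 in X2. apply Rsqr_eq_abs_0 in X2. rewrite X2.
    unfold Rdiv. rewrite Rabs_mult, Rabs_inv, (Rabs_right 2) by lra. reflexivity.
  - exists s. split; [auto|]. split; [rewrite <- Hms; auto|].
    rewrite <- Hms, Hq0. f_equal. unfold m. field. split; auto.
Qed.

Theorem mainTheorem2 (f mu : R) (hf : f <> 0) :
  let e := sqrt ((mu ^ 2 + 1) / 2) in
  (* the curve is the inversive image of the conic *)
  (forall P : pt, curve_C f mu P <->
     exists Q : pt, Q <> (0, 0) /\ conic_K f mu Q /\ inversion f Q = P) /\
  (* each (finite) point (f/(2(mu +- e)), 0) is a focus, with eccentricity e
     and focal parameter |f|/2 *)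
  (forall s : R, (s = 1 \/ s = -1) -> mu + s * e <> 0 ->
     exists L : line,
       is_focus_directrix (conic_K f mu) (f / (2 * (mu + s * e)), 0) L e /\
       e * dist_line (f / (2 * (mu + s * e)), 0) L = Rabs f / 2) /\
  (* and these are the only focus/directrix descriptions of the conic *)
  (forall (F : pt) (L : line) (e' : R),
     is_focus_directrix (conic_K f mu) F L e' ->
     e' = e /\ e' * dist_line F L = Rabs f / 2 /\
     exists s : R, (s = 1 \/ s = -1) /\ mu + s * e <> 0 /\
       F = (f / (2 * (mu + s * e)), 0)).
Proof.
  intros e.
  assert (Hk : 0 < (mu ^ 2 + 1) / 2) by (pose proof (pow2_ge_0 mu); lra).
  assert (He : 0 < e) by (apply sqrt_lt_R0; exact Hk).
  assert (He2 : e ^ 2 = (mu ^ 2 + 1) / 2) by (apply pow2_sqrt; lra).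
  clearbody e.
  split; [|split].
  - intro P; split.
    + intros [HP Hc]. exists (inversion f P). split; [apply inv_nz; auto|].
      split; [apply (proj2 (conic_inv f mu P hf HP)); exact Hc|].
      apply inv_inv; auto.
    + intros [Q [HQ [HK HE]]]. subst P. split; [apply inv_nz; auto|].
      apply (proj1 (conic_inv f mu (inversion f Q) hf (inv_nz f Q hf HQ))).
      rewrite inv_inv; auto.
  - intros s Hs Hm. apply part2; auto.
  - intros F L e' H. apply part3; auto.
Qed.
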